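(* Let $\mathbf{x}_1, \dots, \mathbf{x}_n \in [0,1]^p$ be given, with $n_0$ labeled and $n_1 = n - n_0$ unlabeled observations. For $\pi \in (0,1)$, $\alpha \in \mathbb{R}$ and a function $\eta$ on $[0,1]^p$, define the profile log-likelihood $\ell_n(\pi, \alpha, \eta)$ as \[ \sum_{i=1}^{n_0} \log\left[\frac{n_0 e^{\alpha + \eta(\mathbf{x}_i) - \tau}}{n_1\pi + (n_0 + n_1\pi) e^{\alpha + \eta(\mathbf{x}_i) - \tau}}\right] + \sum_{i=n_0+1}^n \log\left[\frac{n_1\pi + n_1\pi\, e^{\alpha + \eta(\mathbf{x}_i) - \tau}}{n_1\pi + (n_0 + n_1\pi) e^{\alpha + \eta(\mathbf{x}_i) - \tau}}\right], \] where $\tau = \log\{(1-\pi)/\pi\}$. Let $(\pi^{[r]}, \alpha^{[r]}, \eta^{[r]})$, $r = 0, 1, 2, \dots$, be the iterates of the EM-type algorithm described in the context, started from any initial values $(\pi^{[0]}, \alpha^{[0]}, \eta^{[0]})$. Then for every $r \geq 0$, \[ \ell_n(\pi^{[r]}, \alpha^{[r]}, \eta^{[r]}) \leq \ell_n(\pi^{[r+1]}, \alpha^{[r+1]}, \eta^{[r+1]}). \]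
   Context: This is the PU setting under the generalized additive exponential tilting model. Labeled $\mathbf{x}_1, \dots, \mathbf{x}_{n_0}$ are drawn from $g$. Unlabeled $\mathbf{x}_{n_0+1}, \dots, \mathbf{x}_n$ are drawn from $\pi g + (1-\pi) h$. The model is \[ g(\mathbf{x})/h(\mathbf{x}) = \omega(\mathbf{x}) = \exp\{\alpha + \eta(\mathbf{x})\}, \qquad \eta(\mathbf{x}) = \sum_{j=1}^p u_j(x_j). \] Set $y_i = 1$ for $i \le n_0$. The EM-type algorithm is as follows. At iteration $r$: (E-step) For $i = n_0+1, \dots, n$, set \[ y_i^{[r+1]} = \frac{\pi^{[r]} \exp\{\alpha^{[r]} + \eta^{[r]}(\mathbf{x}_i)\}}{\pi^{[r]} \exp\{\alpha^{[r]} + \eta^{[r]}(\mathbf{x}_i)\} + 1 - \pi^{[r]}}. \] Set $y_i^{[r+1]} = 1$ for $i \le n_0$. (M-step) Maximize, over $(\pi, \alpha, \eta)$ in the sieve space and over $\mathbf{p} = (p_1, \dots, p_n)$ with $p_i > 0$, $\sum_i p_i = 1$, $\sum_i p_i \exp\{\alpha + \eta(\mathbf{x}_i)\} = 1$, the function \[ Q^{[r+1]} = \sum_{i=1}^n \log p_i + \sum_{i=1}^{n_0} \{\alpha + \eta(\mathbf{x}_i)\} + \sum_{i=n_0+1}^n \big[y_i^{[r+1]} \log\{\pi e^{\alpha + \eta(\mathbf{x}_i)}\} + (1 - y_i^{[r+1]}) \log(1-\pi)\big]. \] This gives $\pi^{[r+1]} = n_1^{-1} \sum_{i > n_0} y_i^{[r+1]}$.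 The pair $(\alpha^{[r+1]}, \eta^{[r+1]})$ is obtained as follows. First maximize \[ \sum_{i=1}^n y_i^{[r+1]} \{\alpha_* + \eta(\mathbf{x}_i)\} - \sum_{i=1}^n \log[1 + \exp\{\alpha_* + \eta(\mathbf{x}_i)\}] \] over $(\alpha_*, \eta)$. Then set $\alpha^{[r+1]} = \alpha_*^{[r+1]} - c^{[r+1]}$, where \[ c^{[r+1]} = \log(n_0/n_1 + \pi^{[r+1]}) - \log(1 - \pi^{[r+1]}). \] The sieve space restricts $\eta = \sum_j \nu_j(x_j)$ with each $\nu_j$ a spline $\nu_j(x) = \sum_{k=1}^{K_n+m} \theta_{jk} N_k^{[m]}(x)$ in normalized B-splines of order $m$ on $[0,1]$ with $K_n$ interior knots. The coefficients satisfy $\max_k |\theta_{jk}| \le q_j$ and $\int_0^1 \nu_j = 0$. *)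

(* Defs.v *)
From HB Require Import structures.
From mathcomp Require Import all_boot all_order all_algebra.
From mathcomp Require Import all_classical all_reals all_analysis.
Set Implicit Arguments. Unset Strict Implicit. Unset Printing Implicit Defensive.
Import Order.TTheory GRing.Theory Num.Theory.
Local Open Scope ring_scope.

Section PU.
Variable R : realType.

Definition ext_knots (m K : nat) (u : nat -> R) (k : nat) : R :=
  if (k < m)%N then 0 else if (k < m + K)%N then u (k - m)%N else 1.

(** Normalized B-splines by the Cox--de Boor recursion (0/0 := 0, which is
    MathComp's convention x / 0 = 0).  Order-1 splines are indicators of
    [t_k, t_{k+1}), the last non-degenerate interval being closed at 1. *)
Fixpoint bspline (t : nat -> R) (r k : nat) (x : R) : R :=
  match r with
  | 0 => 0
  | 1 => if ((t k <= x) && (x < t k.+1))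
            || [&& x == 1, t k < t k.+1 & t k.+1 == 1] then 1 else 0
  | (r'.+1) as r1 =>
      (x - t k) / (t (k + r')%N - t k) * bspline t r' k x
      + (t (k + r1)%N - x) / (t (k + r1)%N - t k.+1) * bspline t r' k.+1 x
  end.

(** A spline nu(x) = sum_{k=1}^{K+m} theta_k N_k^{[m]}(x) (0-indexed here). *)
Definition spline (m K : nat) (u : nat -> R) (theta : nat -> R) (x : R) : R :=
  \sum_(k < K + m) theta k * bspline (ext_knots m K u) m k x.

Definition in_unit_cube (p : nat) (z : 'rV[R]_p) : Prop :=
  forall j : 'I_p, 0 <= z ord0 j <= 1.

Definition sieve (m K : nat) (u : nat -> R) (p : nat) (q : 'I_p -> R)
    (eta : 'rV[R]_p -> R) : Prop :=
  exists theta : 'I_p -> nat -> R,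
    (forall (j : 'I_p) (k : nat), (k < K + m)%N -> `|theta j k| <= q j)
    /\ (forall j : 'I_p,
          (\int[lebesgue_measure]_(x in `[0%R, 1%R]) (spline m K u (theta j) x)%:E
            = 0)%E)
    /\ (forall z : 'rV[R]_p, in_unit_cube z ->
          eta z = \sum_(j < p) spline m K u (theta j) (z ord0 j)).

(** Profile log-likelihood ell_n(pi, alpha, eta); observations i < n0
    (0-indexed) are the labeled ones. *)
Definition profile_loglik (n n0 p : nat) (x : 'I_n -> 'rV[R]_p)
    (pi alpha : R) (eta : 'rV[R]_p -> R) : R :=
  let n1 := (n - n0)%:R in
  let tau := ln ((1 - pi) / pi) in
  let w i := expR (alpha + eta (x i) - tau) in
  \sum_(i < n | (i < n0)%N)
      ln (n0%:R * w i / (n1 * pi + (n0%:R + n1 * pi) * w i))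
  + \sum_(i < n | (n0 <= i)%N)
      ln ((n1 * pi + n1 * pi * w i) / (n1 * pi + (n0%:R + n1 * pi) * w i)).

Definition estep (n n0 p : nat) (x : 'I_n -> 'rV[R]_p)
    (pi alpha : R) (eta : 'rV[R]_p -> R) (i : 'I_n) : R :=
  if (i < n0)%N then 1
  else pi * expR (alpha + eta (x i)) / (pi * expR (alpha + eta (x i)) + 1 - pi).

Definition logit_obj (n p : nat) (x : 'I_n -> 'rV[R]_p) (y : 'I_n -> R)
    (astar : R) (eta : 'rV[R]_p -> R) : R :=
  \sum_(i < n) (y i * (astar + eta (x i)) - ln (1 + expR (astar + eta (x i)))).

Definition em_step (m K : nat) (u : nat -> R) (n n0 p : nat) (q : 'I_p -> R)
    (x : 'I_n -> 'rV[R]_p) (pi alpha : R) (eta : 'rV[R]_p -> R)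
    (pi' alpha' : R) (eta' : 'rV[R]_p -> R) : Prop :=
  let y := estep n0 x pi alpha eta in
  let n1 := (n - n0)%:R in
  pi' = n1^-1 * \sum_(i < n | (n0 <= i)%N) y i
  /\ exists astar : R,
       sieve m K u q eta'
       /\ (forall (a : R) (e : 'rV[R]_p -> R), sieve m K u q e ->
             logit_obj x y a e <= logit_obj x y astar eta')
       /\ alpha' = astar - (ln (n0%:R / n1 + pi') - ln (1 - pi')).

End PU.

(* Main.v *)
Require Import Defs.
From HB Require Import structures.
From mathcomp Require Import all_boot all_order all_algebra.
From mathcomp Require Import all_classical all_reals all_analysis.
From mathcomp Require Import ring lra.
Import Order.TTheory GRing.Theory Num.Theory.
Local Open Scope ring_scope.
Set Implicit Arguments. Unset Strict Implicit.

Lemma lnsub (R : realType) (P Q : R) : 0 < P -> 0 < Q -> ln P - ln Q <= P / Q - 1.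
Proof.
move=> hP hQ.
have := @ln_div R P Q; rewrite !posrE => /(_ hP hQ) <-.
have := @le_ln1Dx R (P / Q - 1).
rewrite [1 + _]addrC subrK; apply.
by rewrite ltrBrDr addNr divr_gt0.
Qed.

Lemma gibbs (R : realType) (N0 S r : R) : 0 < N0 -> 0 < S -> 0 < r < 1 ->
  N0 * ln (1 - r) + S * ln r <= N0 * ln (1 - S/(N0+S)) + S * ln (S/(N0+S)).
Proof.
move=> h0 hS /andP[r0 r1].
have hNS : 0 < N0 + S by rewrite addr_gt0.
have e1 : 1 - S/(N0+S) = N0/(N0+S) by field; rewrite gt_eqF.
rewrite e1.
have h1 := lnsub (ltac:(by rewrite subr_gt0) : 0 < 1 - r) (divr_gt0 h0 hNS).
have h2 := lnsub r0 (divr_gt0 hS hNS).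
have h1' := ler_wpM2l (ltW h0) h1.
have h2' := ler_wpM2l (ltW hS) h2.
have e : N0 * ((1 - r) / (N0 / (N0 + S)) - 1) + S * (r / (S / (N0 + S)) - 1) = 0.
  by field; rewrite ?gt_eqF.
rewrite !mulrBr in h1' h2'.
rewrite !mulrBr in e.
lra.
Qed.

Lemma mix (R : realType) (B B' : R) : 0 < B -> 0 < B' ->
  ln (1 + B) + B / (1 + B) * (ln B' - ln B) <= ln (1 + B').
Proof.
move=> hB hB'.
have hB1 : 0 < 1 + B by rewrite addr_gt0.
have hB1' : 0 < 1 + B' by rewrite addr_gt0.
have h1 := lnsub hB1 hB1'.
have h2 := lnsub (mulr_gt0 hB1 hB') (mulr_gt0 hB hB1').
have := @lnM R (1 + B) B'; rewrite !posrE => /(_ hB1 hB') e3.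
have := @lnM R B (1 + B'); rewrite !posrE => /(_ hB hB1') e4.
have h2' := h2; rewrite e3 e4 in h2'.
have y0 : 0 <= B / (1 + B) by rewrite divr_ge0 // ltW.
have y1 : 0 <= 1 - B / (1 + B).
  by rewrite subr_ge0 ler_pdivrMr // mul1r lerDr.
have k1 := ler_wpM2l y1 h1.
have k2 := ler_wpM2l y0 h2'.
have e : (1 - B / (1 + B)) * ((1 + B) / (1 + B') - 1)
   + B / (1 + B) * ((1 + B) * B' / (B * (1 + B')) - 1) = 0.
  by field; rewrite ?gt_eqF.
set y := B / (1 + B) in y0 y1 k1 k2 e *.
rewrite !mulrBr in k1 k2 e.
lra.
Qed.
Definition G (R : realType) (n0 : nat) (r a : R) (i : nat) : R :=
  if (i < n0)%N then ln (1 - r) + a - ln (1 + expR a)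
  else ln (1 + r * expR a) - ln (1 + expR a).
Definition Y (R : realType) (n0 : nat) (r a : R) (i : nat) : R :=
  if (i < n0)%N then 1 else r * expR a / (1 + r * expR a).

Lemma count_lt (R : realType) n n0 : (n0 <= n)%N ->
  \sum_(i < n | (i < n0)%N) (1:R) = n0%:R.
Proof.
move=> h.
rewrite -(big_mkord (fun i => (i < n0)%N) (fun _ => (1:R))).
rewrite (eq_bigl (fun i => true && (i < n0)%N)) // -big_nat_widen //.
by rewrite sumr_const_nat subn0.
Qed.

Lemma main_ineq (R : realType) n n0 (r : R) (a a' : 'I_n -> R) :
  (0 < n0)%N -> (n0 <= n)%N -> 0 < r < 1 ->
  0 < \sum_(i < n | (n0 <= i)%N) Y n0 r (a i) i ->
  \sum_(i < n) (Y n0 r (a i) i * a i - ln (1 + expR (a i)))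
    <= \sum_(i < n) (Y n0 r (a i) i * a' i - ln (1 + expR (a' i))) ->
  \sum_(i < n) G n0 r (a i) i
    <= \sum_(i < n) G n0 ((\sum_(i < n | (n0 <= i)%N) Y n0 r (a i) i)
          / (n0%:R + \sum_(i < n | (n0 <= i)%N) Y n0 r (a i) i)) (a' i) i.
Proof.
move=> hn0 hn hr hS hL.
set S := \sum_(i < n | (n0 <= i)%N) Y n0 r (a i) i in hS *.
set r' := S / (n0%:R + S).
have hN0 : 0 < n0%:R :> R by rewrite ltr0n.
have hNS : 0 < n0%:R + S by rewrite addr_gt0.
have r'0 : 0 < r' by rewrite divr_gt0.
have r'1 : r' < 1 by rewrite ltr_pdivrMr // mul1r ltrDr.
case/andP: hr => r0 r1.
pose c (i : 'I_n) := if (i < n0)%N then ln (1 - r') - ln (1 - r)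
                     else Y n0 r (a i) i * (ln r' - ln r).
pose L (b : 'I_n -> R) (i : 'I_n) := Y n0 r (a i) i * b i - ln (1 + expR (b i)).
have hpt : forall i : 'I_n, c i + (L a' i - L a i)
     <= G n0 r' (a' i) i - G n0 r (a i) i.
  move=> i; rewrite /c /L /G /Y.
  case: (i < n0)%N; first by rewrite !mul1r; lra.
  set e := expR (a i); set e' := expR (a' i).
  have he : 0 < e by exact: expR_gt0.
  have he' : 0 < e' by exact: expR_gt0.
  have hm := mix (mulr_gt0 r0 he) (mulr_gt0 r'0 he').
  have := @lnM R r e; rewrite !posrE => /(_ r0 he) E1.
  have := @lnM R r' e'; rewrite !posrE => /(_ r'0 he') E2.
  rewrite E1 E2 /e /e' !expRK in hm.
  rewrite /e /e' in hm *.
  set y := r * expR (a i) / (1 + r * expR (a i)) in hm *.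
  rewrite !mulrBr !mulrDr in hm *.
  lra.
rewrite -subr_ge0 -sumrB.
apply: (le_trans _ (ler_sum _ (fun i _ => hpt i))).
rewrite big_split /= sumrB.
apply: addr_ge0; last by rewrite subr_ge0.
rewrite (bigID (fun i : 'I_n => (i < n0)%N)) /=.
rewrite (eq_bigr (fun _ => ln (1 - r') - ln (1 - r))); last by move=> i hi; rewrite /c hi.
rewrite [X in _ + X](eq_bigr (fun i => Y n0 r (a i) i * (ln r' - ln r))); last first.
  by move=> i /negbTE hi; rewrite /c hi.
rewrite -big_distrl /=.
rewrite [X in 0 <= _ + X * _](eq_bigl (fun i : 'I_n => (n0 <= i)%N)); last by move=> i; rewrite /= -leqNgt.
have -> : \sum_(i < n | (i < n0)%N) (ln (1 - r') - ln (1 - r))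
   = n0%:R * (ln (1 - r') - ln (1 - r)).
  by rewrite -(count_lt R hn) big_distrl /=; apply: eq_bigr => i _; rewrite mul1r.
fold S.
have hg := gibbs hN0 hS (ltac:(by rewrite r0 r1) : 0 < r < 1).
rewrite -/r' in hg.
rewrite !mulrBr. change (\sum_(i < n | (n0 <= i)%N) Y n0 r (a i) i) with S. lra.
Qed.
Ltac pos := match goal with
 | |- is_true (0 < 1 - _) => rewrite subr_gt0; assumption
 | |- is_true (0 < _ + _) => apply: addr_gt0; pos
 | |- is_true (0 < _ * _) => apply: mulr_gt0; pos
 | _ => assumption end.
Ltac nz := repeat (apply/andP; split); apply: lt0r_neq0; pos.

Lemma expR_decomp (R : realType) (pi alpha v : R) (N0 N1 : R) :
  0 < pi < 1 -> 0 < N0 -> 0 < N1 ->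
  expR (alpha - ln ((1 - pi) / pi) + ln ((N0 + N1 * pi) / (N1 * pi)) + v)
  = expR (alpha + v) / ((1 - pi) / pi) * ((N0 + N1 * pi) / (N1 * pi)).
Proof.
move=> /andP[p0 p1] h0 h1.
have hq : 0 < (1 - pi) / pi by rewrite divr_gt0 // subr_gt0.
have hc : 0 < (N0 + N1 * pi) / (N1 * pi).
  by rewrite divr_gt0 // ?addr_gt0 // mulr_gt0.
have -> : alpha - ln ((1 - pi) / pi) + ln ((N0 + N1 * pi) / (N1 * pi)) + v
  = (alpha + v - ln ((1 - pi) / pi)) + ln ((N0 + N1 * pi) / (N1 * pi)) by ring.
by rewrite expRD expRB !lnK ?posrE.
Qed.

Lemma pl_eq (R : realType) n n0 p (x : 'I_n -> 'rV[R]_p) pi alpha eta :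
  (0 < n0)%N -> (n0 < n)%N -> 0 < pi < 1 ->
  profile_loglik n0 x pi alpha eta =
  \sum_(i < n) G n0 ((n - n0)%:R * pi / (n0%:R + (n - n0)%:R * pi))
     (alpha - ln ((1 - pi) / pi) + ln ((n0%:R + (n - n0)%:R * pi) / ((n - n0)%:R * pi))
      + eta (x i)) i.
Proof.
move=> hn0 hn hpi.
have h0 : 0 < n0%:R :> R by rewrite ltr0n.
have h1 : 0 < (n - n0)%:R :> R by rewrite ltr0n subn_gt0.
have hpi' := hpi; case/andP: hpi' => p0 p1.
rewrite /profile_loglik /=.
rewrite [RHS](bigID (fun i : 'I_n => (i < n0)%N)) /=.
rewrite [X in _ = _ + X](eq_bigl (fun i : 'I_n => (n0 <= i)%N)); last first.
  by move=> i; rewrite /= -leqNgt.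
set N0 := n0%:R; set N1 := (n - n0)%:R.
have hq : 0 < (1 - pi) / pi by rewrite divr_gt0 // subr_gt0.
have hc : 0 < (N0 + N1 * pi) / (N1 * pi).
  by rewrite divr_gt0 // ?addr_gt0 // mulr_gt0.
have hr1 : 0 < 1 - N1 * pi / (N0 + N1 * pi).
  by rewrite subr_gt0 ltr_pdivrMr ?addr_gt0 ?mulr_gt0 // mul1r ltrDr.
have hr : 0 < N1 * pi / (N0 + N1 * pi).
  by rewrite divr_gt0 ?addr_gt0 ?mulr_gt0.
set q := (1 - pi) / pi in hq *; set c := (N0 + N1 * pi) / (N1 * pi) in hc *.
congr (_ + _); apply: eq_bigr => i hi; rewrite /G.
- rewrite hi.
  set F := expR (alpha + eta (x i)).
  have hF : 0 < F by exact: expR_gt0.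
  have hw : expR (alpha + eta (x i) - ln q) = F / q by rewrite expRB lnK.
  have hE : expR (alpha - ln q + ln c + eta (x i)) = F / q * c.
    by rewrite /q /c; apply: expR_decomp.
  rewrite hw -{1}[alpha - ln q + ln c + eta (x i)]expRK hE.
  have hE0 : 0 < F / q * c by apply: mulr_gt0 => //; apply: divr_gt0.
  have hE1 : 0 < 1 + F / q * c by rewrite addr_gt0.
  have := @lnM R (1 - N1 * pi / (N0 + N1 * pi)) (F / q * c); rewrite !posrE => /(_ hr1 hE0) <-.
  have := @ln_div R ((1 - N1 * pi / (N0 + N1 * pi)) * (F / q * c)) (1 + F / q * c).
  rewrite !posrE => /(_ (mulr_gt0 hr1 hE0) hE1) <-.
  congr ln; rewrite /q /c.
  field; nz.
- have hi' : (i < n0)%N = false by rewrite ltnNge hi.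
  rewrite hi'.
  set F := expR (alpha + eta (x i)).
  have hF : 0 < F by exact: expR_gt0.
  have hw : expR (alpha + eta (x i) - ln q) = F / q by rewrite expRB lnK.
  have hE : expR (alpha - ln q + ln c + eta (x i)) = F / q * c.
    by rewrite /q /c; apply: expR_decomp.
  rewrite hw hE.
  have hE0 : 0 < F / q * c by apply: mulr_gt0 => //; apply: divr_gt0.
  have hE1 : 0 < 1 + F / q * c by rewrite addr_gt0.
  have hE2 : 0 < 1 + N1 * pi / (N0 + N1 * pi) * (F / q * c).
    by rewrite addr_gt0 // mulr_gt0.
  have := @ln_div R (1 + N1 * pi / (N0 + N1 * pi) * (F / q * c)) (1 + F / q * c).
  rewrite !posrE => /(_ hE2 hE1) <-.
  congr ln; rewrite /q /c.
  field; nz.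
Qed.

Lemma estep_eq (R : realType) n n0 p (x : 'I_n -> 'rV[R]_p) pi alpha eta :
  (0 < n0)%N -> (n0 < n)%N -> 0 < pi < 1 -> forall i : 'I_n,
  estep n0 x pi alpha eta i =
  Y n0 ((n - n0)%:R * pi / (n0%:R + (n - n0)%:R * pi))
     (alpha - ln ((1 - pi) / pi) + ln ((n0%:R + (n - n0)%:R * pi) / ((n - n0)%:R * pi))
      + eta (x i)) i.
Proof.
move=> hn0 hn hpi i.
have h0 : 0 < n0%:R :> R by rewrite ltr0n.
have h1 : 0 < (n - n0)%:R :> R by rewrite ltr0n subn_gt0.
have hpi' := hpi; case/andP: hpi' => p0 p1.
rewrite /estep /Y; case: ifP => // _.
rewrite expR_decomp //.
set F := expR (alpha + eta (x i)).
have hF : 0 < F by exact: expR_gt0.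
field; nz.
Qed.

Lemma count_ge (R : realType) n n0 : (n0 <= n)%N ->
  \sum_(i < n | (n0 <= i)%N) (1:R) = (n - n0)%:R.
Proof.
move=> h.
have : \sum_(i < n) (1:R) = n%:R by rewrite sumr_const card_ord.
rewrite (bigID (fun i : 'I_n => (i < n0)%N)) /= count_lt //.
rewrite (eq_bigl (fun i : 'I_n => (n0 <= i)%N)); last by move=> i; rewrite /= -leqNgt.
by move=> e; rewrite natrB // -e addrC addrK.
Qed.

Lemma sum_pos (R : realType) n n0 (f : 'I_n -> R) : (n0 < n)%N ->
  (forall i : 'I_n, (n0 <= i)%N -> 0 < f i) -> 0 < \sum_(i < n | (n0 <= i)%N) f i.
Proof.
move=> hn hf.
rewrite (bigD1 (Ordinal hn)) //=.
apply: ltr_wpDr; last exact: hf.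
by apply: sumr_ge0 => i /andP[hi _]; apply: ltW; apply: hf.
Qed.
Unset Implicit Arguments. Set Strict Implicit.
Theorem proposition2 (R : realType) (n n0 p : nat) (x : 'I_n -> 'rV[R]_p)
    (m K : nat) (u : nat -> R) (q : 'I_p -> R)
    (pi alpha : nat -> R) (eta : nat -> 'rV[R]_p -> R) :
  (0 < n0)%N -> (n0 < n)%N ->
  (forall i : 'I_n, in_unit_cube (x i)) ->
  (0 < m)%N ->
  (forall k : nat, (k < K)%N -> 0 < u k < 1) ->
  (forall k : nat, (k.+1 < K)%N -> u k < u k.+1) ->
  0 < pi 0%N < 1 ->
  sieve m K u q (eta 0%N) ->
  (forall r : nat, em_step m K u n0 q x (pi r) (alpha r) (eta r)
                     (pi r.+1) (alpha r.+1) (eta r.+1)) ->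
  forall r : nat,
    profile_loglik n0 x (pi r) (alpha r) (eta r)
    <= profile_loglik n0 x (pi r.+1) (alpha r.+1) (eta r.+1).
Proof.
move=> hn0 hn _ _ _ _ hpi0 hs0 hem.
have h0 : 0 < n0%:R :> R by rewrite ltr0n.
have h1 : 0 < (n - n0)%:R :> R by rewrite ltr0n subn_gt0.
set N0 := n0%:R in h0 *; set N1 := (n - n0)%:R in h1 *.
have step : forall r, 0 < pi r < 1 ->
   let rho := N1 * pi r / (N0 + N1 * pi r) in
   let b := alpha r - ln ((1 - pi r) / pi r) + ln ((N0 + N1 * pi r) / (N1 * pi r)) in
   let S := \sum_(i < n | (n0 <= i)%N) Y n0 rho (b + eta r (x i)) i in
   [/\ 0 < S, S < N1 & pi r.+1 = S / N1].
  move=> r hpi rho b S.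
  have hpi' := hpi; case/andP: hpi' => p0 p1.
  have [hp' _] := hem r.
  have hYf : estep n0 x (pi r) (alpha r) (eta r)
       = (fun i : 'I_n => Y n0 rho (b + eta r (x i)) i).
    by apply: funext => i; exact: estep_eq.
  have hrho0 : 0 < rho by rewrite /rho; apply: divr_gt0; pos.
  have hY : forall i : 'I_n, (n0 <= i)%N ->
      0 < Y n0 rho (b + eta r (x i)) i < 1.
    move=> i hi; rewrite /Y ltnNge hi /=.
    have hE := expR_gt0 (b + eta r (x i)).
    have hB : 0 < rho * expR (b + eta r (x i)) by pos.
    have hB1 : 0 < 1 + rho * expR (b + eta r (x i)) by apply: addr_gt0.
    apply/andP; split; first exact: (divr_gt0 hB hB1).
    by rewrite ltr_pdivrMr // mul1r ?ltrDr ?ltrDl.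
  split.
  - by apply: sum_pos => // i hi; case/andP: (hY i hi).
  - rewrite -subr_gt0 /N1 -(count_ge R (ltnW hn)) -sumrB.
    by apply: sum_pos => // i hi; case/andP: (hY i hi) => _; rewrite subr_gt0.
  - by rewrite hp' hYf mulrC.
have inv : forall r, 0 < pi r < 1 /\ sieve m K u q (eta r).
  elim=> [|r [hpi hs]]; first by [].
  have [_ [astar [hs' _]]] := hem r.
  split => //.
  have [hS0 hS1 ->] := step r hpi.
  by rewrite divr_gt0 //= ltr_pdivrMr // mul1r.
move=> r.
have [hpi hs] := inv r.
have [hpi1 _] := inv r.+1.
have [hS0 hS1 hpiS] := step r hpi.
have [hp' [astar [hs' [hmax ha]]]] := hem r.
rewrite !pl_eq //.
have hpi' := hpi; case/andP: hpi' => p0 p1.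
have hpi1' := hpi1; case/andP: hpi1' => p10 p11.
set rho := N1 * pi r / (N0 + N1 * pi r).
set b := alpha r - ln ((1 - pi r) / pi r) + ln ((N0 + N1 * pi r) / (N1 * pi r)).
set S := \sum_(i < n | (n0 <= i)%N) Y n0 rho (b + eta r (x i)) i in hS0 hS1 hpiS.
have hYf : estep n0 x (pi r) (alpha r) (eta r)
     = (fun i : 'I_n => Y n0 rho (b + eta r (x i)) i).
  by apply: funext => i; exact: estep_eq.
have hrho' : N1 * pi r.+1 / (N0 + N1 * pi r.+1) = S / (N0 + S).
  by rewrite hpiS; field; nz.
have hb' : alpha r.+1 - ln ((1 - pi r.+1) / pi r.+1)
     + ln ((N0 + N1 * pi r.+1) / (N1 * pi r.+1)) = astar.
  rewrite ha.
  have e1 : (N0 + N1 * pi r.+1) / (N1 * pi r.+1) = (N0 / N1 + pi r.+1) / pi r.+1.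
    by field; nz.
  have hq1 : 0 < 1 - pi r.+1 by rewrite subr_gt0.
  have hq2 : 0 < N0 / N1 + pi r.+1 by rewrite addr_gt0 // divr_gt0.
  rewrite e1.
  have := @ln_div R (1 - pi r.+1) (pi r.+1); rewrite !posrE => /(_ hq1 p10) ->.
  have := @ln_div R (N0 / N1 + pi r.+1) (pi r.+1); rewrite !posrE => /(_ hq2 p10) ->.
  lra.
rewrite hrho' hb'.
have hrho : 0 < rho < 1.
  rewrite /rho; apply/andP; split; first by apply: divr_gt0; pos.
  by rewrite ltr_pdivrMr; [rewrite mul1r ltrDr | pos].
have := main_ineq (a := fun i => b + eta r (x i)) (a' := fun i => astar + eta r.+1 (x i))
   hn0 (ltnW hn) hrho hS0.
apply.
have := hmax b (eta r) hs.
by rewrite hYf /logit_obj.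
Qed.
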